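(* Let $X$ be a space and let $n \ge 0$. Then for every $\gamma \in \pi_0(L^n X)$ there is a unique pair consisting of \begin{itemize} \item an order-preserving injection $\iota\colon [k] \hookrightarrow [n]$, and \item a new element $\gamma' \in \pi_0(L^k X)$, \end{itemize} such that $\gamma$ is the image of $\gamma'$ under the map $\pi_0(L^kX)\to\pi_0(L^nX)$ induced by the standard projection associated with $\iota$.
   Context: For $n\ge 0$ write $[n]=\{1,\dots,n\}$, $\mathbb{T}^n=(S^1)^n$, and $L^nX = \mathrm{Map}(\mathbb{T}^n, X)$; thus $L^1 X= LX$ is the free loop space and $L^0X=X$. An order-preserving injection $\iota\colon [k] \hookrightarrow [n]$ induces the standard projection $\mathbb{T}^n \to \mathbb{T}^k$, which is the projection onto the coordinates in the image of $\iota$. By precomposition, this projection induces a map $L^kX \to L^nX$. An element of $\pi_0(L^nX)$ is called old if it lies in the image of $\pi_0(L^kX)\to\pi_0(L^nX)$ for some standard projection with $k<n$. Otherwise it is called new. *)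

(* Defs.v *)
From HB Require Import structures.
From mathcomp Require Import all_boot all_order all_algebra.
From mathcomp Require Import all_classical all_reals all_analysis.
From Stdlib Require Rdefinitions.
From mathcomp Require Import Rstruct Rstruct_topology.
Set Implicit Arguments. Unset Strict Implicit. Unset Printing Implicit Defensive.
Import Order.TTheory GRing.Theory Num.Theory.
Local Open Scope classical_set_scope.
Local Open Scope ring_scope.

Definition circle_set : set (Rdefinitions.R * Rdefinitions.R) :=
  [set z | z.1 ^+ 2 + z.2 ^+ 2 = 1].
Definition S1 : topologicalType := set_type circle_set.

Definition torus (n : nat) : topologicalType := {ptws 'I_n -> S1}.

Definition mapsp (n : nat) (X : topologicalType) : topologicalType :=
  {compact-open, torus n -> X}.
Definition LnX (n : nat) (X : topologicalType) : set (mapsp n X) :=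
  [set f | continuous (f : torus n -> X)].

Definition same_pi0 (n : nat) (X : topologicalType) (f g : mapsp n X) : Prop :=
  exists p : Rdefinitions.R -> mapsp n X,
    [/\ {within `[0%R, 1%R], continuous p},
        (forall t, t \in `[0%R, 1%R] -> @LnX n X (p t)),
        p 0%R = f & p 1%R = g].

Definition order_inj (k n : nat) (iota : 'I_k -> 'I_n) : Prop :=
  forall i j : 'I_k, (i < j)%N -> (iota i < iota j)%N.

Definition std_proj (k n : nat) (iota : 'I_k -> 'I_n) : torus n -> torus k :=
  fun t => fun j : 'I_k => t (iota j).

Definition induced_map (X : topologicalType) (k n : nat) (iota : 'I_k -> 'I_n)
  (g : mapsp k X) : mapsp n X :=
  fun t : torus n => (g : torus k -> X) (std_proj iota t).

Definition old_class (X : topologicalType) (k : nat) (g : mapsp k X) : Prop :=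
  exists (m : nat) (iota : 'I_m -> 'I_k) (h : mapsp m X),
    [/\ (m < k)%N, order_inj iota, @LnX m X h & same_pi0 (induced_map iota h) g].
Definition new_class (X : topologicalType) (k : nat) (g : mapsp k X) : Prop :=
  ~ old_class g.

(* Reindexing along an equality k = k' (identity once the equation is
   destructed). *)
Definition cast_map (X : topologicalType) (k k' : nat) (e : k = k')
  (g : mapsp k' X) : mapsp k X :=
  fun t : torus k => (g : torus k' -> X) (fun j : 'I_k' => t (cast_ord (esym e) j)).

(* Main.v *)
Require Import Defs.
From HB Require Import structures.
From mathcomp Require Import all_boot all_order all_algebra.
From mathcomp Require Import all_classical all_reals all_analysis.
From mathcomp Require Import Rstruct Rstruct_topology.
From mathcomp Require Import lra.
Set Implicit Arguments. Unset Strict Implicit. Unset Printing Implicit Defensive.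
Import Order.TTheory GRing.Theory Num.Theory.
Import numFieldNormedType.Exports.
Local Open Scope classical_set_scope.
Local Open Scope ring_scope.

Lemma within_comp (T U V : topologicalType) (A : set T) (B : set U)
  (h : T -> U) (p : U -> V) :
  continuous h -> (forall x, A x -> B (h x)) -> {within B, continuous p} ->
  {within A, continuous (p \o h)}.
Proof.
move=> ch hAB /continuousP cp; apply/continuousP => O oO.
have [W oW WB] := (open_subspaceP _ _).1 (cp O oO).
apply/open_subspaceP; exists (h @^-1` W).
  by move/continuousP: ch; apply.
rewrite eqEsubset; split => x [Wx Ax]; split => //.
  have : (W `&` B) (h x) by split => //; exact: hAB.
  by rewrite WB => -[].
have : ((p @^-1` O) `&` B) (h x) by split => //; exact: hAB.
by rewrite -WB => -[].
Qed.

Lemma ptws_continuous (Y : topologicalType) (I : Type) (T : topologicalType)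
  (f : Y -> {ptws I -> T}) : (forall i, continuous (fun y => f y i)) -> continuous f.
Proof.
move=> cf y; apply/cvg_sup => i.
move=> U [?/= [[W oW <-]]] /= Wsfz /filterS; apply; apply: (cf i).
exact: open_nbhs_nbhs.
Qed.

Lemma cont_affine (R : realType) (a b : R) : continuous (fun t : R => a * t + b).
Proof.
move=> x; apply: cvgD; last exact: cvg_cst.
apply: cvgZr; exact: cvg_id.
Qed.
Lemma cont_affineR (a b : Rdefinitions.R) : continuous (fun t : Rdefinitions.R => a * t + b).
Proof. exact: cont_affine. Qed.

Lemma clR (R : realType) (a b : R) : closed `[a, b]%classic.
Proof. exact: itv_closed. Qed.
Lemma clRR (a b : Rdefinitions.R) : closed `[a, b]%classic.
Proof. exact: clR. Qed.

Definition precomp (X : topologicalType) (a b : nat) (phi : torus a -> torus b)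
  (g : mapsp b X) : mapsp a X := fun t => (g : torus b -> X) (phi t).
Lemma precomp_continuous (X : topologicalType) (a b : nat) (phi : torus a -> torus b) :
  continuous phi -> continuous (@precomp X a b phi).
Proof.
move=> cphi g.
have FF : Filter (precomp phi @ g) by apply: fmap_filter; exact: nbhs_filter.
apply: (iffRL (@compact_open_cvgP (torus a) X _ _ FF)) => K O cK oO gKO.
have cK' : compact (phi @` K) by apply: continuous_compact => //; exact: continuous_subspaceT.
have : nbhs g [set h : mapsp b X | h @` (phi @` K) `<=` O].
  apply: open_nbhs_nbhs; split; first exact: compact_open_open.
  by move=> _ [_ [x Kx <-] <-]; apply: gKO; exists x.
apply: filterS => h hO _ [x Kx <-]; apply: hO; exists (phi x) => //; exists x.
Qed.

Lemma LnX_precomp (X : topologicalType) (a b : nat) (phi : torus a -> torus b) g :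
  continuous phi -> @LnX b X g -> @LnX a X (precomp phi g).
Proof. by move=> cphi cg t; apply: continuous_comp; [exact: cphi | exact: cg]. Qed.

Lemma same_pi0_precomp (X : topologicalType) (a b : nat) (phi : torus a -> torus b) u v :
  continuous phi -> @same_pi0 b X u v -> same_pi0 (precomp phi u) (precomp phi v).
Proof.
move=> cphi [p [cp Lp p0 p1]]; exists (precomp phi \o p); split.
- move=> x; apply: (@continuous_comp _ _ _ (from_subspace `[0, 1]%classic p) (precomp phi)).
    exact: cp.
  exact: precomp_continuous.
- by move=> t /Lp; exact: LnX_precomp.
- by rewrite /= p0.
- by rewrite /= p1.
Qed.

Lemma same_pi0_refl (X : topologicalType) (n : nat) (f : mapsp n X) :
  LnX f -> same_pi0 f f.
Proof.
move=> Lf; exists (fun _ => f); split => //.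
exact: cst_continuous.
Qed.

Lemma same_pi0_sym (X : topologicalType) (n : nat) (f g : mapsp n X) :
  same_pi0 f g -> same_pi0 g f.
Proof.
move=> [p [cp Lp p0 p1]]; exists (p \o (fun t => -1 * t + 1)); split.
- apply: (@within_comp Rdefinitions.R Rdefinitions.R _ _ `[0, 1]%classic); last exact: cp.
    exact: cont_affineR.
  move=> x /=; rewrite !in_itv /= => /andP[h0 h1]; apply/andP; split; lra.
- move=> t; rewrite in_itv /= => /andP[h0 h1]; apply: Lp.
  rewrite in_itv /=; apply/andP; split; lra.
- by rewrite /= mulr0 add0r.
- by rewrite /= mulr1 addNr.
Qed.

Lemma same_pi0_trans (X : topologicalType) (n : nat) (f g h : mapsp n X) :
  same_pi0 f g -> same_pi0 g h -> same_pi0 f h.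
Proof.
move=> [p [cp Lp p0 p1]] [q [cq Lq q0 q1]].
exists (fun t => if t <= 1/2 then p (2 * t + 0) else q (2 * t + -1)); split.
- apply: (@continuous_subspaceW Rdefinitions.R _ `[0, 1]%classic
    (`[0, 1/2]%classic `|` `[1/2, 1]%classic)).
    move=> x /=; rewrite !in_itv /= => /andP[h0 h1].
    have [hx|hx] := lerP x (1/2); [left|right]; rewrite /= ?in_itv /= ?andbT;
      try (apply/andP; split); lra.
  apply: withinU_continuous; [exact: clRR | exact: clRR | |].
  + apply: (@subspace_eq_continuous Rdefinitions.R _ _
      (from_subspace _ (p \o (fun t => 2 * t + 0)))).
      move=> x; rewrite inE /= in_itv /= => /andP[h0 h1].
      by rewrite /from_subspace /= h1.
    apply: (@within_comp Rdefinitions.R Rdefinitions.R _ _ `[0, 1]%classic); last exact: cp.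
      exact: cont_affineR.
    move=> x /=; rewrite !in_itv /= => /andP[h0 h1]; apply/andP; split; lra.
  + apply: (@subspace_eq_continuous Rdefinitions.R _ _
      (from_subspace _ (q \o (fun t => 2 * t + -1)))).
      move=> x; rewrite inE /= in_itv /= => /andP[h0 h1].
      rewrite /from_subspace /=; case: ifP => // hx.
      have e1 : 2 * x + 0 = 1 by lra.
      have e2 : 2 * x + -1 = 0 by lra.
      by rewrite /= e1 e2 p1 q0.
    apply: (@within_comp Rdefinitions.R Rdefinitions.R _ _ `[0, 1]%classic); last exact: cq.
      exact: cont_affineR.
    move=> x /=; rewrite !in_itv /= => /andP[h0 h1]; apply/andP; split; lra.
- move=> t; rewrite in_itv /= => /andP[h0 h1].
  case: ifP => hx.
    by apply: Lp; rewrite in_itv /=; apply/andP; split; lra.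
  have hx' : 1/2 < t by rewrite ltNge hx.
  by apply: Lq; rewrite in_itv /=; apply/andP; split; lra.
- have -> : (0 : Rdefinitions.R) <= 1/2 by lra.
  by rewrite mulr0 addr0.
- have -> : ((1 : Rdefinitions.R) <= 1/2) = false by apply/negbTE; rewrite -ltNge; lra.
  by rewrite mulr1 addrK.
Qed.

Lemma base_mem : ((1, 0) : Rdefinitions.R * Rdefinitions.R) \in circle_set.
Proof. by rewrite inE /circle_set /= expr1n expr0n addr0. Qed.

Definition base : S1 := exist _ ((1, 0) : Rdefinitions.R * Rdefinitions.R) base_mem.

Lemma coord_continuous (k : nat) (i : 'I_k) : continuous (fun t : torus k => t i).
Proof. exact: (@proj_continuous _ (fun _ : 'I_k => S1) i). Qed.

Lemma std_proj_continuous k n (iota : 'I_k -> 'I_n) : continuous (std_proj iota).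
Proof. apply: ptws_continuous => i; exact: coord_continuous. Qed.

Definition sec k n (iota : 'I_k -> 'I_n) (t : torus k) : torus n :=
  fun x => match [pick i | iota i == x] with Some i => t i | None => base end.

Lemma sec_continuous k n (iota : 'I_k -> 'I_n) : continuous (sec iota).
Proof.
apply: ptws_continuous => x; rewrite /sec.
case: pickP => [i _|_]; first exact: coord_continuous.
exact: cst_continuous.
Qed.

Lemma order_inj_inj k n (iota : 'I_k -> 'I_n) : order_inj iota -> injective iota.
Proof.
move=> oi i j eij; apply/eqP; rewrite eq_sym; apply/negPn/negP => /negP nij.
case: (ltngtP i j) => h.
- by have := oi _ _ h; rewrite eij ltnn.
- by have := oi _ _ h; rewrite eij ltnn.
- by apply: nij; apply/eqP; apply: val_inj.
Qed.

Lemma std_proj_sec k n (iota : 'I_k -> 'I_n) t : injective iota ->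
  std_proj iota (sec iota t) = t.
Proof.
move=> ii; apply: funext => j; rewrite /std_proj /sec.
case: pickP => [i /eqP /ii -> //|/(_ j)]; by rewrite eqxx.
Qed.

Lemma lift_order_inj k (i0 : 'I_k) : order_inj (lift i0).
Proof.
move=> a b ab /=; rewrite /bump.
case: (leqP i0 a) => ha; case: (leqP i0 b) => hb; rewrite ?add1n ?add0n ?ltnS //.
- by have := leq_ltn_trans ha (leq_ltn_trans (ltnW ab) hb); rewrite ltnn.
- exact: ltnW.
Qed.

Definition psi n k k' (iota : 'I_k -> 'I_n) (iota' : 'I_k' -> 'I_n) (i0 : 'I_k)
  (s : torus k.-1) : torus k' :=
  fun y => match [pick i | iota i == iota' y] with
           | Some i => match unlift i0 i with Some z => s z | None => base end
           | None => base end.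

Lemma psi_continuous n k k' (iota : 'I_k -> 'I_n) (iota' : 'I_k' -> 'I_n) i0 :
  continuous (psi iota iota' i0).
Proof.
apply: ptws_continuous => y; rewrite /psi.
case: pickP => [i _|_]; last exact: cst_continuous.
case: (unlift i0 i) => [z|]; last exact: cst_continuous.
exact: coord_continuous.
Qed.

Lemma psi_key n k k' (iota : 'I_k -> 'I_n) (iota' : 'I_k' -> 'I_n) i0 t :
  (forall j, iota' j != iota i0) ->
  psi iota iota' i0 (std_proj (lift i0) t) = std_proj iota' (sec iota t).
Proof.
move=> ni; apply: funext => y; rewrite /psi /std_proj /sec.
case: pickP => [i /eqP ei|//].
case: unliftP => [z -> //|ei0].
by have := ni y; rewrite -ei ei0 eqxx.
Qed.

Lemma not_in_image_old (X : topologicalType) n k k' (iota : 'I_k -> 'I_n)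
  (iota' : 'I_k' -> 'I_n) (g : mapsp k X) (g' : mapsp k' X) (f : mapsp n X) i0 :
  order_inj iota -> @LnX k' X g' ->
  same_pi0 (induced_map iota g) f -> same_pi0 (induced_map iota' g') f ->
  (forall j, iota' j != iota i0) -> old_class g.
Proof.
move=> oi Lg' s1 s2 ni.
exists k.-1, (lift i0), (precomp (psi iota iota' i0) g'); split.
- by rewrite ltn_predL (leq_ltn_trans (leq0n i0) (ltn_ord i0)).
- exact: lift_order_inj.
- apply: LnX_precomp => //; exact: psi_continuous.
have E1 : induced_map (lift i0) (precomp (psi iota iota' i0) g') =
          precomp (sec iota) (induced_map iota' g').
  by apply: funext => t; rewrite /induced_map /precomp psi_key.
have E2 : g = precomp (sec iota) (induced_map iota g).
  apply: funext => t; rewrite /induced_map /precomp std_proj_sec //.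
  exact: order_inj_inj.
rewrite E1 [X in same_pi0 _ X]E2; apply: same_pi0_precomp; first exact: sec_continuous.
apply: same_pi0_trans s2 _; exact: same_pi0_sym.
Qed.

Lemma order_inj_comp m k n (i1 : 'I_m -> 'I_n) (i2 : 'I_k -> 'I_m) :
  order_inj i1 -> order_inj i2 -> order_inj (i1 \o i2).
Proof. by move=> o1 o2 a b ab; apply: o1; apply: o2. Qed.

Lemma existence (X : topologicalType) n (f : mapsp n X) : LnX f ->
  exists k (iota : 'I_k -> 'I_n) (g : mapsp k X),
    [/\ order_inj iota, LnX g, new_class g & same_pi0 (induced_map iota g) f].
Proof.
elim/ltn_ind: n f => n IH f Lf.
case: (pselect (old_class f)) => [[m [i1 [h [mn oi1 Lh sh]]]]|nold].
  have [k [i2 [g [oi2 Lg ng sg]]]] := IH m mn h Lh.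
  exists k, (i1 \o i2), g; split => //; first exact: order_inj_comp.
  apply: same_pi0_trans sh.
  change (same_pi0 (precomp (std_proj i1) (induced_map i2 g)) (precomp (std_proj i1) h)).
  exact: (same_pi0_precomp (@std_proj_continuous _ _ i1) sg).
exists n, id, f; split => //; exact: same_pi0_refl.
Qed.

Lemma order_inj_rev k n (iota : 'I_k -> 'I_n) a b :
  order_inj iota -> (iota a < iota b)%N -> (a < b)%N.
Proof.
move=> oi h; rewrite ltnNge leq_eqVlt; apply/negP => /orP[/eqP e|ba].
  have eb : b = a by apply: val_inj.
  by move: h; rewrite eb ltnn.
by have := ltn_trans (oi _ _ ba) h; rewrite ltnn.
Qed.

Lemma order_inj_eq k n (iota iota' : 'I_k -> 'I_n) :
  order_inj iota -> order_inj iota' ->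
  (forall i, exists j, iota' j = iota i) -> (forall j, exists i, iota i = iota' j) ->
  forall i, iota' i = iota i.
Proof.
move=> oi oi' A B.
have ii := order_inj_inj oi; have ii' := order_inj_inj oi'.
suff H : forall N (i : 'I_k), (i < N)%N -> iota' i = iota i by move=> i; exact: (H i.+1).
elim=> [//|N IH] i iN.
have IH' : forall i' : 'I_k, (i' < i)%N -> iota' i' = iota i'.
  by move=> i' h; apply: IH; exact: leq_trans h iN.
have [j ej] := A i.
case: (ltngtP j i) => h.
- have := IH' _ h; rewrite ej => /ii eij.
  by move: h; rewrite eij ltnn.
- have [i2 ei2] := B i.
  have h2 : (iota i2 < iota i)%N by rewrite ei2 -ej; exact: oi'.
  have h3 := order_inj_rev oi h2.
  have := IH' _ h3; rewrite ei2 => /ii' e.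
  by move: h3; rewrite e ltnn.
- by move: ej; have -> : j = i by apply: val_inj.
Qed.

Lemma card_eq k k' n (iota : 'I_k -> 'I_n) (iota' : 'I_k' -> 'I_n) :
  injective iota -> injective iota' ->
  (forall i, exists j, iota' j = iota i) -> (forall j, exists i, iota i = iota' j) ->
  k = k'.
Proof.
move=> ii ii' A B.
have E : iota @: [set: 'I_k]%SET = iota' @: [set: 'I_k']%SET.
  apply/setP => x; apply/imsetP/imsetP => -[i _ ->].
    by have [j ej] := A i; exists j; rewrite ?inE // ej.
  by have [j ej] := B i; exists j; rewrite ?inE // ej.
have := card_imset [set: 'I_k]%SET ii; rewrite E card_imset // !cardsT !card_ord.
by [].
Qed.

Lemma image_sub (X : topologicalType) n k k' (iota : 'I_k -> 'I_n)
  (iota' : 'I_k' -> 'I_n) (g : mapsp k X) (g' : mapsp k' X) (f : mapsp n X) :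
  order_inj iota -> @LnX k' X g' -> new_class g ->
  same_pi0 (induced_map iota g) f -> same_pi0 (induced_map iota' g') f ->
  forall i, exists j, iota' j = iota i.
Proof.
move=> oi Lg' ng s1 s2 i; apply: contrapT => nA; apply: ng.
apply: (@not_in_image_old X n k k' iota iota' g g' f i oi Lg' s1 s2).
by move=> j; apply/eqP => e; apply: nA; exists j.
Qed.

Unset Implicit Arguments.
Theorem proposition2p5 (X : topologicalType) (n : nat) (f : mapsp n X) :
  @LnX n X f ->
  exists (k : nat) (iota : 'I_k -> 'I_n) (g : mapsp k X),
    [/\ order_inj iota, @LnX k X g, new_class g,
        same_pi0 (induced_map iota g) f &
        forall (k' : nat) (iota' : 'I_k' -> 'I_n) (g' : mapsp k' X),
          order_inj iota' -> @LnX k' X g' -> new_class g' ->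
          same_pi0 (induced_map iota' g') f ->
          exists e : k = k',
            (forall i : 'I_k, iota' (cast_ord e i) = iota i) /\
            same_pi0 g (cast_map e g')].
Proof.
move=> Lf; have [k [iota [g [oi Lg ng sg]]]] := existence Lf.
exists k, iota, g; split => // k' iota' g' oi' Lg' ng' sg'.
have A := image_sub oi Lg' ng sg sg'.
have B := image_sub oi' Lg ng' sg' sg.
have e := card_eq (order_inj_inj oi) (order_inj_inj oi') A B.
exists e; destruct e.
have E : iota' = iota.
  by apply: funext; apply: order_inj_eq.
split; first by move=> i; rewrite E; congr iota; apply: val_inj.
have -> : cast_map (erefl k) g' = g'.
  by apply: funext => t; rewrite /cast_map; congr g'; apply: funext => j; congr t; apply: val_inj.
have E2 : forall h : mapsp k X, h = precomp (sec iota) (induced_map iota h).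
  move=> h; apply: funext => t; rewrite /induced_map /precomp std_proj_sec //.
  exact: order_inj_inj.
rewrite (E2 g) (E2 g'); apply: same_pi0_precomp; first exact: sec_continuous.
apply: same_pi0_trans sg _; apply: same_pi0_sym; by rewrite -E.
Qed.
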